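(* There exist absolute constants $c>0$ and $n_0$ such that for every $n\ge n_0$, every $\epsilon\in(3\ln n/n,\,1/12)$, and every $\epsilon$-differentially private algorithm $M$ that takes as input a graph on a fixed vertex set $V$ with $|V|=n$ and outputs a cut $(S,V\setminus S)$ with $\emptyset\ne S\subsetneq V$, there exists a graph $G=(V,E)$ such that $\mathbb{E}[\mathrm{Cost}(G,M(G))]\ge \mathrm{OPT}(G)+c\ln n/\epsilon$.
   Context: A randomized algorithm $M$ on graphs with vertex set $V$ is $\epsilon$-differentially private if for any two edge sets $E,E'$ on $V$ whose symmetric difference has size one and any set $\mathcal{O}$ of outputs, $\Pr[M(V,E)\in\mathcal{O}]\le e^{\epsilon}\Pr[M(V,E')\in\mathcal{O}]$. For a graph $G$ and cut $(S,V\setminus S)$, $\mathrm{Cost}(G,(S,V\setminus S))$ is the number of edges of $G$ with exactly one endpoint in $S$, and $\mathrm{OPT}(G)$ is the minimum of this quantity over all $\emptyset\ne S\subsetneq V$. *)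

(* Defs.v *)
From Stdlib Require Import Reals.
From HB Require Import structures.
From mathcomp Require Import all_boot all_order all_algebra.
From mathcomp Require Import Rstruct.
Set Implicit Arguments. Unset Strict Implicit. Unset Printing Implicit Defensive.
Import Order.TTheory GRing.Theory Num.Theory.
Local Open Scope ring_scope.

Definition is_graph (n : nat) (E : {set {set 'I_n}}) : bool :=
  [forall e in E, #|e| == 2]%N.

Definition is_cut (n : nat) (S : {set 'I_n}) : bool :=
  (S != set0) && (S != setT).

Definition cut_cost (n : nat) (E : {set {set 'I_n}}) (S : {set 'I_n}) : nat :=
  #|[set e in E | #|e :&: S| == 1%N]|.

(* OPT(G): minimum of cut_cost over all nonempty proper S
   (the seed #|E| is an upper bound on every cut cost). *)
Definition OPT (n : nat) (E : {set {set 'I_n}}) : nat :=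
  \big[minn/#|E|]_(S : {set 'I_n} | is_cut S) cut_cost E S.

Definition cut_algorithm (n : nat) (M : {set {set 'I_n}} -> {ffun {set 'I_n} -> R}) : Prop :=
  forall E : {set {set 'I_n}}, is_graph E ->
    (forall S, 0 <= M E S) /\ (\sum_(S : {set 'I_n}) M E S = 1) /\
    (forall S, ~~ is_cut S -> M E S = 0).

Definition prob_in (n : nat) (M : {set {set 'I_n}} -> {ffun {set 'I_n} -> R})
  (E : {set {set 'I_n}}) (O : {set {set 'I_n}}) : R :=
  \sum_(S in O) M E S.

Definition edge_dp (n : nat) (eps : R) (M : {set {set 'I_n}} -> {ffun {set 'I_n} -> R}) : Prop :=
  forall E E' : {set {set 'I_n}}, is_graph E -> is_graph E' ->
    #|(E :\: E') :|: (E' :\: E)| = 1%N ->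
    forall O : {set {set 'I_n}}, prob_in M E O <= exp eps * prob_in M E' O.

Definition expected_cost (n : nat) (M : {set {set 'I_n}} -> {ffun {set 'I_n} -> R})
  (E : {set {set 'I_n}}) : R :=
  \sum_(S : {set 'I_n}) M E S * (cut_cost E S)%:R.

(* Main.v *)
Require Import Defs.
From Stdlib Require Import Reals.
From HB Require Import structures.
From mathcomp Require Import all_boot all_order all_algebra.
From mathcomp Require Import Rstruct.
From mathcomp Require Import zify ring lra.
Import Order.TTheory GRing.Theory Num.Theory.

Section Comb.
Variable n : nat.
Implicit Types (S A T : {set 'I_n}) (E F : {set {set 'I_n}}).

Definition pr (p : 'I_n * 'I_n) : {set 'I_n} := [set p.1; p.2].

Lemma pr_inj S : {in setX S (~: S) &, injective pr}.
Proof.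
move=> [a b] [c d]; rewrite !inE /= => /andP[aS bS] /andP[cS dS] /setP H.
have := H a; rewrite !inE eqxx /= => /esym /orP[/eqP ac | /eqP ad].
- have := H b; rewrite !inE eqxx orbT /= => /esym /orP[/eqP bc | /eqP bd].
  + by rewrite bc cS in bS.
  + by rewrite ac bd.
- by rewrite ad (negbTE dS) in aS.
Qed.

Lemma cut_cost_pairs E S : is_graph E ->
  cut_cost E S = #|[set p in setX S (~: S) | pr p \in E]|.
Proof.
move=> gE; rewrite /cut_cost.
transitivity #|pr @: [set p in setX S (~: S) | pr p \in E]|; last first.
  apply: card_in_imset.
  move=> p q; rewrite !inE => /andP[p1 _] /andP[q1 _].
  by apply: (@pr_inj S); rewrite !inE.
apply: eq_card => e; rewrite inE; apply/andP/imsetP.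
- move=> [eE He]; move: gE; rewrite /is_graph => /forall_inP /(_ e eE) /cards2P [x [y [xy exy]]].
  subst e.
  case xS: (x \in S); case yS: (y \in S).
  + have : [set x; y] :&: S = [set x; y].
      by apply/setIidPl; rewrite subUset !sub1set xS yS.
    by move=> h; rewrite h cards2 xy in He.
  + exists (x, y); last by [].
    by rewrite !inE /= xS yS eE.
  + exists (y, x); last by rewrite /pr /= setUC.
    by rewrite !inE /= xS yS /pr /= setUC eE.
  + have : [set x; y] :&: S = set0.
      apply/eqP; rewrite -subset0; apply/subsetP => z; rewrite !inE.
      by case/andP => /orP[] /eqP ->; rewrite ?xS ?yS.
    by move=> h; rewrite h cards0 in He.
- move=> [[a b]]; rewrite !inE /= => /andP[/andP[aS bS] pE] ->; rewrite pE /=.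
  have -> : pr (a, b) :&: S = [set a].
    apply/setP => z; rewrite !inE; case: (z =P a) => [->|_] /=; first by rewrite aS.
    by case: (z =P b) => [->|] //=; rewrite (negbTE bS).
  by rewrite cards1.
Qed.


Definition Kn : {set {set 'I_n}} := [set e : {set 'I_n} | #|e| == 2].
Definition Fi (i : 'I_n) T : {set {set 'I_n}} := [set [set i; t] | t in T].
Definition Yf F S := [set p in setX S (~: S) | pr p \in F].

Lemma graph_KD F : is_graph (Kn :\: F).
Proof. by rewrite /is_graph; apply/forall_inP => e; rewrite !inE => /andP[_]. Qed.

Lemma graph_Kn : is_graph Kn.
Proof. by rewrite /is_graph; apply/forall_inP => e; rewrite !inE. Qed.

Lemma cost_KD F S : cut_cost (Kn :\: F) S + #|Yf F S| = #|S| * #|~: S|.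
Proof.
rewrite cut_cost_pairs ?graph_KD // -cardsX -[RHS](cardsID (Yf F S)) addnC.
congr (_ + _); apply: eq_card => -[a b]; rewrite !inE /=.
- by case: (a \in S); case: (b \in S); case: (pr _ \in F).
- case aS: (a \in S); case bS: (b \in S) => //=.
  rewrite /pr /= cards2.
  by case: (a =P b) => [ab|_]; [rewrite ab bS in aS | rewrite andbT].
Qed.

Lemma Yf_inj F S : #|pr @: Yf F S| = #|Yf F S|.
Proof.
apply: card_in_imset => p q; rewrite !inE => /andP[p1 _] /andP[q1 _].
by apply: (@pr_inj S); rewrite !inE.
Qed.

Lemma Yf_le_T i T S : #|Yf (Fi i T) S| <= #|T|.
Proof.
rewrite -Yf_inj; apply: leq_trans (leq_imset_card (fun t => [set i; t]) T).
apply: subset_leq_card; apply/subsetP => e /imsetP [p]; rewrite inE => /andP[_ H] ->.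
exact: H.
Qed.

Lemma Yf_i i T S p : p \in Yf (Fi i T) S -> (p.1 == i) || (p.2 == i).
Proof.
rewrite inE => /andP[_ /imsetP [t _ H]].
have : i \in pr p by rewrite H !inE eqxx.
by rewrite !inE orbC; case/orP => /eqP ->; rewrite eqxx ?orbT.
Qed.

Arguments Yf_i {i T S p}.

Lemma Yf_in i T S : i \in S -> #|Yf (Fi i T) S| <= #|~: S|.
Proof.
move=> iS; apply: leq_trans (_ : #|setX [set i] (~: S)| <= _); last by rewrite cardsX cards1 mul1n.
apply: subset_leq_card; apply/subsetP => p pY; have := Yf_i pY.
move: pY; rewrite !inE => /andP[/andP[p1 p2] _] /orP[] /eqP e.
  by rewrite e eqxx.
by rewrite e iS in p2.
Qed.

Lemma Yf_out i T S : i \notin S -> #|Yf (Fi i T) S| <= #|S|.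
Proof.
move=> iS; apply: leq_trans (_ : #|setX S [set i]| <= _); last by rewrite cardsX cards1 muln1.
apply: subset_leq_card; apply/subsetP => p pY; have := Yf_i pY.
move: pY; rewrite !inE => /andP[/andP[p1 p2] _] /orP[] /eqP e.
  by rewrite e (negbTE iS) in p1.
by rewrite e eqxx p1.
Qed.

Lemma Yf_single i T : T \subset ~: [set i] -> #|T| <= #|Yf (Fi i T) [set i]|.
Proof.
move=> sT; apply: leq_trans (_ : #|setX [set i] T| <= _); first by rewrite cardsX cards1 mul1n.
apply: subset_leq_card; apply/subsetP => [[a b]]; rewrite !inE /= => /andP[/eqP -> bT].
have := subsetP sT b bT; rewrite !inE => ->; rewrite eqxx /=.
by apply/imsetP; exists b.
Qed.


Lemma card2_of i (A : {set 'I_n}) : i \in A -> A != [set i] -> 1 < #|A|.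
Proof.
move=> iA nA; rewrite ltnNge; apply/negP => h.
have : #|A| == 1.
  by rewrite eqn_leq h /= card_gt0; apply/set0Pn; exists i.
case/cards1P => x Ax; move: iA nA; rewrite Ax inE => /eqP ->.
by rewrite eqxx.
Qed.

Lemma cut_cards S : is_cut S -> 0 < #|S| /\ 0 < #|~: S| /\ #|S| + #|~: S| = n.
Proof.
case/andP => S0 ST; split; first by rewrite card_gt0.
split; last by rewrite cardsC card_ord.
rewrite card_gt0; apply: contra ST => /eqP h.
by rewrite -(setCK S) h setC0.
Qed.

Section Bounds.
Variables (i : 'I_n) (T : {set 'I_n}).
Hypothesis sT : T \subset ~: [set i].
Let E := Kn :\: Fi i T.

Lemma bound_a S : is_cut S -> n <= cut_cost E S + #|T| + 1.
Proof.
move=> /cut_cards [s0 [t0 st]].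
have h1 := cost_KD (Fi i T) S; have h2 := Yf_le_T i T S.
rewrite /E in h1 *. nia.
Qed.

Lemma bound_b S : is_cut S -> S != [set i] -> S != ~: [set i] ->
  n <= cut_cost E S + 2.
Proof.
move=> /cut_cards [s0 [t0 st]] n1 n2.
have h1 := cost_KD (Fi i T) S; rewrite /E in h1 *.
case iS: (i \in S).
- have h2 := Yf_in i T S iS; have h3 := card2_of i S iS n1. nia.
- have h2 := Yf_out i T S (negbT iS).
  have iC : i \in ~: S by rewrite inE iS.
  have h3 : 1 < #|~: S|.
    apply: (card2_of i (~: S) iC); apply: contra n2 => /eqP h; by rewrite -h setCK.
  nia.
Qed.

Lemma bound_c : cut_cost E [set i] + #|T| + 1 <= n.
Proof.
have h1 := cost_KD (Fi i T) [set i]; have h2 := Yf_single i T sT.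
have h3 : #|~: [set i]| = n.-1 by rewrite cardsC1 card_ord.
rewrite cards1 h3 /E in h1.
have n0 : 0 < n by case: i => m; case: n.
rewrite mul1n in h1; rewrite -[X in _ <= X](prednK n0) addn1 ltnS -h1 leq_add2l; exact: h2.
Qed.

End Bounds.

End Comb.

Local Open Scope ring_scope.

Lemma graph_sub n (E E' : {set {set 'I_n}}) : E' \subset E -> is_graph E -> is_graph E'.
Proof.
move=> sE; rewrite /is_graph => /forall_inP H; apply/forall_inP => e eE.
exact: H (subsetP sE e eE).
Qed.

Lemma dp_chain n eps (M : {set {set 'I_n}} -> {ffun {set 'I_n} -> R}) (dp : edge_dp eps M) (E : {set {set 'I_n}}) :
  is_graph E -> forall m (E' : {set {set 'I_n}}), E' \subset E -> #|E :\: E'| = m ->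
  forall O, prob_in M E' O <= exp eps ^+ m * prob_in M E O.
Proof.
move=> gE; elim=> [|m IH] E' sE cE O.
  have -> : E' = E.
    apply/eqP; rewrite eqEsubset sE /=; apply/subsetP => x xE.
    apply/negPn/negP => xE'.
    have : x \in E :\: E' by rewrite inE xE' xE.
    by move/cards0_eq: cE => ->; rewrite inE.
  by rewrite expr0 mul1r.
have [e eD] : exists e, e \in E :\: E'.
  by apply/set0Pn; rewrite -card_gt0 cE.
have eE : e \in E by move: eD; rewrite inE => /andP[].
have eE' : e \notin E' by move: eD; rewrite inE => /andP[].
have sE'' : e |: E' \subset E by rewrite subUset sub1set eE sE.
have cE'' : #|E :\: (e |: E')| = m.
  have : #|E :\: E'| = ((e \in E :\: E') + #|(E :\: E') :\ e|)%N := cardsD1 e _.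
  rewrite cE eD add1n => -[->]; apply: eq_card => x; rewrite !inE.
  by case: (x == e); case: (x \in E'); case: (x \in E).
have h1 := IH _ sE'' cE'' O.
have gE' := graph_sub _ _ _ sE gE.
have gE'' := graph_sub _ _ _ sE'' gE.
have hsd : #|(E' :\: (e |: E')) :|: ((e |: E') :\: E')| = 1%N.
  rewrite -(cards1 e); apply: eq_card => x; rewrite !inE.
  by case: (x =P e) => [->|]; rewrite ?(negbTE eE') //=; case: (x \in E').
have h2 := dp _ _ gE' gE'' hsd O.
apply: (le_trans h2); rewrite exprS -mulrA; apply: ler_wpM2l => //.
by apply/ltW/RltP/exp_pos.
Qed.

Lemma exists_subset (T : finType) (A : {set T}) k : (k <= #|A|)%N ->
  exists B : {set T}, B \subset A /\ #|B| = k.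
Proof.
elim: k => [|k IH] hk; first by exists set0; rewrite sub0set cards0.
have [B [sB cB]] := IH (ltnW hk).
have : B \proper A by rewrite properEcard sB cB hk.
case/properP => _ [x xA xB]; exists (x |: B); split.
  by rewrite subUset sub1set xA sB.
by rewrite cardsU1 xB cB.
Qed.

Lemma big_minn_le (I : eqType) (r : seq I) (P : pred I) (F : I -> nat) x j :
  j \in r -> P j -> (\big[minn/x]_(i <- r | P i) F i <= F j)%N.
Proof.
elim: r => [//|a r IH]; rewrite inE big_cons => /orP[/eqP -> Pj | jr Pj].
  by rewrite Pj; exact: geq_minl.
case: (P a); last exact: IH.
exact: leq_trans (geq_minr _ _) (IH jr Pj).
Qed.

Lemma OPT_le n (E : {set {set 'I_n}}) S : is_cut S -> (OPT E <= cut_cost E S)%N.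
Proof.
move=> cS; rewrite /OPT; apply: big_minn_le => //; exact: mem_index_enum.
Qed.

Lemma exp_nat (x : R) k : exp (k%:R * x) = exp x ^+ k.
Proof.
elim: k => [|k IH].
  change (exp (GRing.mul 0%:R x) = 1); rewrite mul0r; exact: exp_0.
change (exp (GRing.mul (k.+1)%:R x) = exp x ^+ k.+1).
rewrite exprS -IH -natr1 mulrDl mul1r addrC.
exact: exp_plus.
Qed.

Lemma exp_le (x y : R) : x <= y -> exp x <= exp y.
Proof.
rewrite le_eqVlt => /orP[/eqP -> // | /RltP h].
exact/ltW/RltP/exp_increasing.
Qed.

Lemma exp_lb n (M : {set {set 'I_n}} -> {ffun {set 'I_n} -> R}) (E G : {set {set 'I_n}}) (k : nat) : cut_algorithm M -> is_graph E ->
  (forall S, is_cut S -> (n <= cut_cost E S + k + 1)%N) ->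
  (forall S, is_cut S -> S \notin G -> (n <= cut_cost E S + 2)%N) ->
  n%:R - 2 - (k%:R - 1) * prob_in M E G <= expected_cost M E.
Proof.
move=> cM gE ha hb; have [M0 [M1 M2]] := cM E gE.
rewrite /expected_cost /prob_in big_mkcond /= mulr_sumr.
have -> : n%:R - 2 = \sum_S M E S * (n%:R - 2) :> R by rewrite -mulr_suml M1 mul1r.
rewrite -sumrB; apply: ler_sum => S _.
case cS: (is_cut S); last by rewrite M2 ?cS //; case: (S \in G); rewrite !mul0r ?mulr0 subr0.
have m0 := M0 S.
case SG: (S \in G).
- have := ha S cS; rewrite -(ler_nat R) !natrD => h. nra.
- have := hb S cS (negbT SG); rewrite -(ler_nat R) !natrD => h. rewrite mulr0 subr0. nra.
Qed.

Definition Good {n} (i : 'I_n) : {set {set 'I_n}} := [set [set i]; ~: [set i]].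

Lemma sum_good n (M : {set {set 'I_n}} -> {ffun {set 'I_n} -> R}) (E : {set {set 'I_n}}) : (3 <= n)%N -> cut_algorithm M -> is_graph E ->
  \sum_(i : 'I_n) prob_in M E (Good i) <= 1.
Proof.
move=> n3 cM gE; have [M0 [M1 M2]] := cM E gE.
rewrite /prob_in -partition_disjoint_bigcup.
  rewrite -M1 [X in _ <= X](bigID (fun S => S \in \bigcup_i Good i)) /= lerDl.
  by apply: sumr_ge0 => S _.
move=> i j ij; rewrite -setI_eq0; apply/eqP/setP => S; rewrite !inE.
apply/negP => /andP[/orP[] /eqP -> /orP[]]; move/eqP.
- by move/set1_inj => e; rewrite e eqxx in ij.
- move=> e; have := congr1 (fun A : {set 'I_n} => #|A|) e; rewrite /= cards1 cardsC1 card_ord; lia.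
- move=> e; have := congr1 (fun A : {set 'I_n} => #|A|) e; rewrite /= cards1 cardsC1 card_ord; lia.
- by move/setC_inj/set1_inj => e; rewrite e eqxx in ij.
Qed.

Lemma ltn_pred_le a b : (a < b)%N -> (a <= b.-1)%N.
Proof. by case: b. Qed.

Lemma nat1 (o c k n : nat) : (o <= c)%N -> (c + k + 1 <= n)%N -> (o + k + 1 <= n)%N.
Proof. lia. Qed.

Lemma ar5 (a e : R) : 0 < e -> 1 / 6 * (a * (2 * e)) / e = a / 3.
Proof. move=> h; field; exact: lt0r_neq0. Qed.

Lemma ar1 (k a e L : R) : k <= a -> a * (2 * e) = L -> 0 < e -> k * e + k * e <= L.
Proof. move=> h1 h2 h3; have : k * e <= a * e by apply: ler_wpM2r => //; exact: ltW. lra. Qed.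

Lemma ar2 (p y n : R) : p * n <= y -> y * y <= n -> 0 <= y -> 20 <= n -> p <= 1 / 2.
Proof.
move=> h1 h2 h3 h4; rewrite leNgt; apply/negP => h5.
have h6 : n / 2 < y by nra.
have : n / 2 * (n / 2) < y * y by nra.
nra.
Qed.

Lemma ar3 (a e L : R) : a * (2 * e) = L -> 1 <= L -> 0 < e -> e < 1 / 12 -> 6 <= a.
Proof. move=> h1 h2 h3 h4; nra. Qed.

Lemma ar4 (O k n a p : R) : O + k + 1 <= n -> a < k + 1 -> 6 <= a -> 0 <= p -> p <= 1 / 2 ->
  O + a / 3 <= n - 2 - (k - 1) * p.
Proof.
move=> h1 h2 h3 h4 h5; have h6 : (k - 1) * p <= (k - 1) / 2 by nra.
lra.
Qed.

Theorem mainTheorem2 :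
  exists (c : R) (n0 : nat), 0 < c /\
    forall (n : nat), (n0 <= n)%N ->
    forall (eps : R), 3 * ln n%:R / n%:R < eps -> eps < 1 / 12 ->
    forall M : {set {set 'I_n}} -> {ffun {set 'I_n} -> R},
      cut_algorithm M -> edge_dp eps M ->
      exists E : {set {set 'I_n}}, is_graph E /\
        (OPT E)%:R + c * ln n%:R / eps <= expected_cost M E.
Proof.
exists (1/6), 20%N; split; first lra.
move=> n n20 eps he1 he2 M cM dpM.
have n0 : 0 < n%:R :> R by rewrite ltr0n; lia.
have n20R : 20 <= n%:R :> R by move: n20; rewrite -(ler_nat R).
set L := ln n%:R.
have L1 : 1 <= L.
  have h : Rlt (exp 1) n%:R.
    apply/RltP; apply: (le_lt_trans (y := 3)); first exact/RleP/exp_le_3.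
    lra.
  have := ln_increasing _ _ (exp_pos 1) h; rewrite ln_exp => /RltP; exact: ltW.
have he1' : 3 * L < eps * n%:R by rewrite -ltr_pdivrMr.
have e0 : 0 < eps by nra.
set a := L / (2 * eps).
have aE : a * (2 * eps) = L by rewrite /a mulfVK //; lra.
have a0 : 0 <= a by rewrite /a divr_ge0 //; lra.
set k := Num.truncn a.
have ka : k%:R <= a by rewrite truncn_le.
have ka2 : a < k%:R + 1 by rewrite natr1; exact: truncnS_gt.
have an : a < n%:R / 6 by nra.
have kn : (k <= n.-1)%N.
  have : k%:R < n%:R :> R by lra.
  by rewrite ltr_nat; apply: ltn_pred_le.
pose T (i : 'I_n) := odflt set0 [pick B : {set 'I_n} | (B \subset ~: [set i]) && (#|B| == k)].
have hT i : T i \subset ~: [set i] /\ #|T i| = k.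
  rewrite /T; case: pickP => [B /andP[h1 /eqP h2] | H] //=.
  have hk : (k <= #|~: [set i]|)%N by rewrite cardsC1 card_ord.
  have [B [h1 h2]] := exists_subset _ _ _ hk.
  by have := H B; rewrite h1 h2 eqxx.
pose E (i : 'I_n) := Kn n :\: Fi n i (T i).
pose p i := prob_in M (E i) (Good i).
pose q i := prob_in M (Kn n) (Good i).
set y := exp eps.
have y1 : 1 <= y.
  have h : exp 0 <= y by apply: exp_le; exact: ltW e0.
  by move: h; rewrite exp_0.
have [K0 [K1 K2]] := cM _ (graph_Kn n).
have hp i : p i <= y ^+ k * q i.
  have sub : E i \subset Kn n by rewrite /E subDset subsetUr.
  have := dp_chain n eps M dpM (Kn n) (graph_Kn n) #|Kn n :\: E i| (E i) sub erefl (Good i).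
  move=> h; apply: (le_trans h); apply: ler_wpM2r.
    by apply: sumr_ge0.
  apply: ler_weXn2l => //.
  apply: (leq_trans (n := #|Fi n i (T i)|)).
    apply: subset_leq_card; apply/subsetP => e; rewrite !inE.
    by case/andP => /negP h1 h2; apply/negPn/negP => h3; apply: h1; rewrite h3.
  by case: (hT i) => _ <-; apply: leq_imset_card.
have hsum : \sum_i p i <= y ^+ k.
  apply: (le_trans (y := \sum_i y ^+ k * q i)); first by apply: ler_sum => i _; apply: hp.
  rewrite -mulr_sumr; rewrite -[X in _ <= X]mulr1; apply: ler_wpM2l.
    by apply: exprn_ge0; exact: le_trans ler01 y1.
  apply: sum_good => //; [exact: leq_trans _ n20 | exact: graph_Kn].
have [i hi] : exists i, p i * n%:R <= y ^+ k.
  case: (boolP [exists i, p i * n%:R <= y ^+ k]) => [/existsP//|/existsPn H].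
  have : \sum_(i : 'I_n) y ^+ k / n%:R < \sum_i p i.
    have i0 : 'I_n by apply: (@Ordinal n 0); exact: leq_trans _ n20.
    apply: ltr_sum; first by apply/hasP; exists i0; rewrite ?mem_index_enum.
    move=> i _; have := H i; rewrite -ltNge => h.
    by rewrite ltr_pdivrMr.
  have -> : \sum_(i : 'I_n) y ^+ k / n%:R = y ^+ k.
    rewrite sumr_const card_ord -[(_ / _) *+ _]mulr_natr divfK //; exact: lt0r_neq0.
  move=> h; have := hsum; rewrite leNgt h //.
have yk : y ^+ k * y ^+ k <= n%:R.
  have e1 : y ^+ k * y ^+ k = exp (k%:R * eps + k%:R * eps).
    by rewrite exp_plus !exp_nat.
  rewrite e1 -[X in _ <= X](exp_ln n%:R); last exact/RltP.
  apply: exp_le; rewrite -/L; exact: (ar1 _ _ _ _ ka aE e0).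
have yk0 : 0 <= y ^+ k by apply: exprn_ge0; exact: le_trans ler01 y1.
have ph : p i <= 1 / 2 by exact: (ar2 _ _ _ hi yk yk0 n20R).
have [sT cT] := hT i.
exists (E i); split; first exact: graph_KD.
have ha S : is_cut S -> (n <= cut_cost (E i) S + k + 1)%N.
  by move=> cS; rewrite -cT; apply: (bound_a n i (T i) sT S cS).
have hb S : is_cut S -> S \notin Good i -> (n <= cut_cost (E i) S + 2)%N.
  by move=> cS; rewrite !inE negb_or => /andP[n1 n2]; apply: (bound_b n i (T i) sT S cS n1 n2).
have hlb := exp_lb n M (E i) (Good i) k cM (graph_KD n (Fi n i (T i))) ha hb.
have cut1 : is_cut [set i].
  apply/andP; split; first by apply/set0Pn; exists i; rewrite inE.
  apply/negP => /eqP h; have := congr1 (fun A : {set 'I_n} => #|A|) h.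
  by rewrite cards1 cardsT card_ord => e; rewrite -e in n20.
have hc := bound_c n i (T i) sT; rewrite cT in hc.
have hopt := OPT_le n (E i) [set i] cut1.
have hO : (OPT (E i))%:R + k%:R + 1 <= n%:R :> R.
  by have := nat1 _ _ _ _ hopt hc; rewrite -(ler_nat R) !natrD.
have hL : 1 / 6 * L / eps = a / 3.
  rewrite -aE; exact: ar5.
have a6 : 6 <= a by exact: (ar3 _ _ _ aE L1 e0 he2).
have p0 : 0 <= p i by apply: sumr_ge0 => S _; have [M0 _] := cM _ (graph_KD n (Fi n i (T i))).
rewrite hL; apply: le_trans hlb; rewrite -/(p i).
exact: (ar4 _ _ _ _ _ hO ka2 a6 p0 ph).
Qed.
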